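(* Let $(A,\succ,\prec,\omega)$ be a quadratic Leibniz-dendriform algebra and $r\in A\otimes A$ such that $r+\tau(r)$ is invariant. Define $P:A\to A$ by $P(x)=T_r(\omega^\sharp(x))$. Then $r$ satisfies $S(r)=0$ if and only if for all $x,y\in A$: $P(x)\succ P(y)=P\big(P(x)\succ y+x\succ P(y)-x\succ T_{r+\tau(r)}\omega^\sharp(y)\big)$ and $P(x)\prec P(y)=P\big(P(x)\prec y+x\prec P(y)-x\prec T_{r+\tau(r)}\omega^\sharp(y)\big)$.
   Context: $\langle\cdot,\cdot\rangle$ is the natural pairing, $I$ the identity, $\tau(a\otimes b)=b\otimes a$. A Leibniz-dendriform algebra is a vector space $A$ with bilinear operations $\succ,\prec$ such that, with $x\circ y:=x\succ y+x\prec y$, for all $x,y,z$: $(x\circ y)\succ z=x\succ(y\succ z)-y\succ(x\succ z)$, $y\prec(x\circ z)+(x\succ y)\prec z=x\succ(y\prec z)$, $x\prec(y\circ z)=(x\prec y)\prec z+y\succ(x\prec z)$. A quadratic Leibniz-dendriform algebra is one with a non-degenerate symmetric bilinear form $\omega$ with $\omega(x\prec y,z)=\omega(x,y\circ z+z\circ y)$ and $\omega(x\succ y,z)=-\omega(y,x\circ z)$ for all $x,y,z$; $\omega^\sharp:A\to A^*$ is $\langle\omega^\sharp(x),y\rangle=\omega(x,y)$. Write $x\odot y:=x\succ y+y\prec x$, $x\star y:=x\circ y+y\circ x$; $L_*(x)y=x*y$, $R_*(x)y=y*x$; $L_\odot:=L_\succ+R_\prec$, $L_\star:=L_\circ+R_\circ$.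 For $r=\sum_ia_i\otimes b_i$: $T_r:A^*\to A$, $\langle T_r(\zeta),\eta\rangle=\langle r,\zeta\otimes\eta\rangle$; $S(r):=\sum_{i,j}\big(a_i\otimes a_j\otimes (b_j\circ b_i)-a_i\otimes (b_i\odot a_j)\otimes b_j-(a_i\succ a_j)\otimes b_i\otimes b_j\big)$. $s\in A\otimes A$ is invariant if for all $x$: $(L_\odot(x)\otimes I-I\otimes R_\circ(x))s=0$ and $(L_\star(x)\otimes I-I\otimes R_\prec(x))\tau(s)=0$. *)

(* Defs.v *)
(* A finite-dimensional vector space A over a field K is
   modelled as 'rV[K]_n; tensors in A (x) A (resp. A (x) A (x) A) are finite
   sums of pure tensors, i.e. sequences of pairs (triples), compared through
   their coordinates in the standard basis. *)
From HB Require Import structures.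
From mathcomp Require Import all_boot all_order all_algebra.
Set Implicit Arguments. Unset Strict Implicit. Unset Printing Implicit Defensive.
Import Order.TTheory GRing.Theory Num.Theory.
Local Open Scope ring_scope.

Section LD.
Variables (K : fieldType) (n : nat).
Local Notation A := 'rV[K]_n.

Definition bilinear_op (m : A -> A -> A) : Prop :=
  (forall (a : K) x y z, m (a *: x + y) z = a *: m x z + m y z) /\
  (forall (a : K) x y z, m x (a *: y + z) = a *: m x y + m x z).

Definition bilinear_form (w : A -> A -> K) : Prop :=
  (forall (a : K) x y z, w (a *: x + y) z = a * w x z + w y z) /\
  (forall (a : K) x y z, w x (a *: y + z) = a * w x y + w x z).

Variables (succ prec : A -> A -> A).

Definition circ x y := succ x y + prec x y.
Definition odot x y := succ x y + prec y x.
Definition star x y := circ x y + circ y x.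

Definition is_LD_algebra : Prop :=
  bilinear_op succ /\ bilinear_op prec /\
  (forall x y z, succ (circ x y) z = succ x (succ y z) - succ y (succ x z)) /\
  (forall x y z, prec y (circ x z) + prec (succ x y) z = succ x (prec y z)) /\
  (forall x y z, prec x (circ y z) = prec (prec x y) z + succ y (prec x z)).

Definition is_quadratic_LD (w : A -> A -> K) : Prop :=
  is_LD_algebra /\ bilinear_form w /\
  (forall x y, w x y = w y x) /\
  (forall x, (forall y, w x y = 0) -> x = 0) /\
  (forall x y z, w (prec x y) z = w x (circ y z + circ z y)) /\
  (forall x y z, w (succ x y) z = - w y (circ x z)).

Definition tcoord2 (s : seq (A * A)) (p q : 'I_n) : K :=
  \sum_(u <- s) u.1 0 p * u.2 0 q.
Definition teq2 (s t : seq (A * A)) : Prop :=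
  forall p q, tcoord2 s p q = tcoord2 t p q.
Definition tau (s : seq (A * A)) : seq (A * A) := map (fun u => (u.2, u.1)) s.
Definition tadd (s t : seq (A * A)) : seq (A * A) := s ++ t.
Definition tapp2 (f g : A -> A) (s : seq (A * A)) : seq (A * A) :=
  map (fun u => (f u.1, g u.2)) s.

Definition LD_invariant (s : seq (A * A)) : Prop :=
  forall x : A,
    teq2 (tapp2 (odot x) id s) (tapp2 id (fun y => circ y x) s) /\
    teq2 (tapp2 (star x) id (tau s)) (tapp2 id (fun y => prec y x) (tau s)).

(* T_r : A^* -> A, with zeta in A^* given as a (linear) map A -> K:
   T_r(zeta) = sum_i zeta(a_i) b_i *)
Definition Tr (s : seq (A * A)) (zeta : A -> K) : A :=
  \sum_(u <- s) zeta u.1 *: u.2.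

(* omega^sharp x = omega x (as a functional) *)
Definition Pmap (w : A -> A -> K) (r : seq (A * A)) (x : A) : A := Tr r (w x).

(* coordinates of S(r) in A (x) A (x) A *)
Definition Scoord (r : seq (A * A)) (p q t : 'I_n) : K :=
  \sum_(i <- r) \sum_(j <- r)
    (i.1 0 p * j.1 0 q * (circ j.2 i.2) 0 t
     - i.1 0 p * (odot i.2 j.1) 0 q * j.2 0 t
     - (succ i.1 j.1) 0 p * i.2 0 q * j.2 0 t).

Definition S_zero (r : seq (A * A)) : Prop :=
  forall p q t, Scoord r p q t = 0.

End LD.

(* Main.v *)
Require Import Defs.
From mathcomp Require Import all_boot all_order all_algebra.
From mathcomp Require Import ring.
Import GRing.Theory.
Local Open Scope ring_scope.

Set Implicit Arguments. Unset Strict Implicit. Unset Printing Implicit Defensive.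

Section Gen.
Variables (K : fieldType) (n : nat).
Local Notation A := 'rV[K]_n.

Definition linA (h : A -> A) := forall (a : K) x y, h (a *: x + y) = a *: h x + h y.
Definition linK (h : A -> K) := forall (a : K) x y, h (a *: x + y) = a * h x + h y.

Lemma linA0 h : linA h -> h 0 = 0.
Proof. move=> H; have e := H 1 0 0; rewrite !scale1r addr0 in e; apply: (addrI (h 0)); by rewrite addr0 -e. Qed.
Lemma linAD h : linA h -> forall x y, h (x + y) = h x + h y.
Proof. by move=> H x y; rewrite -{1}(scale1r x) H scale1r. Qed.
Lemma linAZ h : linA h -> forall a x, h (a *: x) = a *: h x.
Proof. by move=> H a x; rewrite -(addr0 (a *: x)) H linA0 // addr0. Qed.
Lemma linAN h : linA h -> forall x, h (- x) = - h x.
Proof. by move=> H x; rewrite -scaleN1r linAZ // scaleN1r. Qed.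
Lemma linAB h : linA h -> forall x y, h (x - y) = h x - h y.
Proof. by move=> H x y; rewrite linAD // linAN. Qed.
Lemma linA_sum h I (s : seq I) (F : I -> K) (G : I -> A) : linA h ->
  h (\sum_(i <- s) F i *: G i) = \sum_(i <- s) F i *: h (G i).
Proof.
move=> H; elim: s => [|i s IH]; first by rewrite !big_nil linA0.
by rewrite !big_cons H IH.
Qed.
Lemma linA_sum1 h I (s : seq I) (G : I -> A) : linA h ->
  h (\sum_(i <- s) G i) = \sum_(i <- s) h (G i).
Proof.
move=> H; elim: s => [|i s IH]; first by rewrite !big_nil linA0.
by rewrite !big_cons linAD // IH.
Qed.

Lemma linK0 h : linK h -> h 0 = 0.
Proof. move=> H; have e := H 1 0 0; rewrite !scale1r addr0 mul1r in e; apply: (addrI (h 0)); by rewrite addr0 -e. Qed.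
Lemma linKD h : linK h -> forall x y, h (x + y) = h x + h y.
Proof. by move=> H x y; rewrite -{1}(scale1r x) H mul1r. Qed.
Lemma linKZ h : linK h -> forall a x, h (a *: x) = a * h x.
Proof. by move=> H a x; rewrite -(addr0 (a *: x)) H linK0 // addr0. Qed.
Lemma linKN h : linK h -> forall x, h (- x) = - h x.
Proof. by move=> H x; rewrite -scaleN1r linKZ // mulN1r. Qed.
Lemma linK_sum h I (s : seq I) (F : I -> K) (G : I -> A) : linK h ->
  h (\sum_(i <- s) F i *: G i) = \sum_(i <- s) F i * h (G i).
Proof.
move=> H; elim: s => [|i s IH]; first by rewrite !big_nil linK0.
by rewrite !big_cons H IH.
Qed.

Lemma linA_comp (f g : A -> A) : linA f -> linA g -> linA (fun x => f (g x)).
Proof. by move=> Hf Hg a x y; rewrite Hg Hf. Qed.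
Lemma linK_comp (f : A -> K) (g : A -> A) : linK f -> linA g -> linK (fun x => f (g x)).
Proof. by move=> Hf Hg a x y; rewrite Hg Hf. Qed.
Lemma linA_add (f g : A -> A) : linA f -> linA g -> linA (fun x => f x + g x).
Proof. by move=> Hf Hg a x y; rewrite Hf Hg scalerDr; rewrite -!addrA; congr (_ + _); rewrite addrCA. Qed.
End Gen.

Lemma lin1 (K : comRingType) (c x y L R : K) : L = R -> x - y = c * (L - R) -> x = y.
Proof. by move=> -> /eqP; rewrite subrr mulr0 subr_eq0 => /eqP. Qed.
Lemma lin2 (K : comRingType) (c d x y L R L' R' : K) : L = R -> L' = R' ->
  x - y = c * (L - R) + d * (L' - R') -> x = y.
Proof. by move=> -> -> /eqP; rewrite !subrr !mulr0 addr0 subr_eq0 => /eqP. Qed.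
Lemma lin3 (K : comRingType) (c d f x y L R L' R' L'' R'' : K) : L = R -> L' = R' -> L'' = R'' ->
  x - y = c * (L - R) + d * (L' - R') + f * (L'' - R'') -> x = y.
Proof. by move=> -> -> -> /eqP; rewrite !subrr !mulr0 !addr0 subr_eq0 => /eqP. Qed.

Lemma zeq (V : zmodType) (u v u' v' : V) : u - v = u' - v' -> (u = v <-> u' = v').
Proof.
move=> e; split=> /eqP; rewrite -subr_eq0 => /eqP h; apply/eqP; rewrite -subr_eq0.
  by rewrite -e h.
by rewrite e h.
Qed.

Section LD2.
Variables (K : fieldType) (n : nat).
Local Notation A := 'rV[K]_n.
Variables (succ prec : A -> A -> A) (w : A -> A -> K) (r : seq (A * A)).
Hypothesis HQ : is_quadratic_LD succ prec w.

Local Notation circ := (circ succ prec).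
Local Notation star := (star succ prec).
Local Notation odot := (odot succ prec).

Lemma Hs : bilinear_op succ. Proof. by case: HQ => [[]]. Qed.
Lemma Hp : bilinear_op prec. Proof. by case: HQ => [[? []]]. Qed.
Lemma Hw : bilinear_form w. Proof. by case: HQ => [_ []]. Qed.
Lemma wsym x y : w x y = w y x. Proof. by case: HQ => [_ [_ []]]. Qed.
Lemma Hnd x : (forall y, w x y = 0) -> x = 0. Proof. case: HQ => [_ [_ [_ [H _]]]]; exact: H. Qed.
Lemma Q1 x y z : w (prec x y) z = w x (star y z). Proof. case: HQ => [_ [_ [_ [_ [H _]]]]]; exact: H. Qed.
Lemma Q2 x y z : w (succ x y) z = - w y (circ x z). Proof. case: HQ => [_ [_ [_ [_ [_ H]]]]]; exact: H. Qed.

Lemma ls_l z : linA (fun x => succ x z). Proof. by move=> a x y; case: Hs => ->. Qed.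
Lemma ls_r x : linA (succ x). Proof. by move=> a y z; case: Hs => _ ->. Qed.
Lemma lp_l z : linA (fun x => prec x z). Proof. by move=> a x y; case: Hp => ->. Qed.
Lemma lp_r x : linA (prec x). Proof. by move=> a y z; case: Hp => _ ->. Qed.
Lemma lw_l z : linK (fun x => w x z). Proof. by move=> a x y; case: Hw => ->. Qed.
Lemma lw_r x : linK (w x). Proof. by move=> a y z; case: Hw => _ ->. Qed.
Lemma lc_l z : linA (fun x => circ x z).
Proof. exact: (linA_add (ls_l z) (lp_l z)). Qed.
Lemma lc_r x : linA (circ x).
Proof. exact: (linA_add (ls_r x) (lp_r x)). Qed.
Lemma lst_l z : linA (fun x => star x z).
Proof. exact: (linA_add (lc_l z) (lc_r z)). Qed.
Lemma lst_r x : linA (star x).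
Proof. exact: (linA_add (lc_r x) (lc_l x)). Qed.
Lemma lo_l z : linA (fun x => odot x z).
Proof. exact: (linA_add (ls_l z) (lp_r z)). Qed.
Lemma lo_r x : linA (odot x).
Proof. exact: (linA_add (ls_r x) (lp_l x)). Qed.

Lemma wDr z u v : w z (u + v) = w z u + w z v. Proof. exact: (linKD (lw_r z) u v). Qed.
Lemma wNr z u : w z (- u) = - w z u. Proof. exact: (linKN (lw_r z) u). Qed.
Lemma wZr z a u : w z (a *: u) = a * w z u. Proof. exact: (linKZ (lw_r z) a u). Qed.
Lemma wDl z u v : w (u + v) z = w u z + w v z. Proof. exact: (linKD (lw_l z) u v). Qed.
Lemma wNl z u : w (- u) z = - w u z. Proof. exact: (linKN (lw_l z) u). Qed.
Lemma wZl z a u : w (a *: u) z = a * w u z. Proof. exact: (linKZ (lw_l z) a u). Qed.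

Lemma veq (u v : A) : (forall z, w z u = w z v) -> u = v.
Proof.
move=> H; apply/eqP; rewrite -subr_eq0; apply/eqP/Hnd => y.
by rewrite wsym wDr wNr H subrr.
Qed.
Lemma veq' (u v : A) : (forall z, w u z = w v z) -> u = v.
Proof. by move=> H; apply: veq => z; rewrite wsym H wsym. Qed.

Lemma Dc a b c : w (circ a b) c = - w b (circ a c) + w a (star b c).
Proof. by rewrite /Defs.circ wDl Q2 Q1. Qed.

Ltac wx := repeat (first [rewrite wDr | rewrite wNr]).

Definition FF (g h : A * A -> A) (s : seq (A * A)) (x : A) : A :=
  \sum_(u <- s) w x (g u) *: h u.
Lemma lFF g h s : linA (FF g h s).
Proof.
move=> a x y; rewrite /FF scaler_sumr -big_split /=; apply: eq_bigr => u _.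
by rewrite (lw_l (g u)) scalerDl scalerA.
Qed.
Lemma adjFF g h s x z : w (FF g h s x) z = w x (FF h g s z).
Proof.
rewrite /FF (linK_sum _ _ _ (lw_l z)) (linK_sum _ _ _ (lw_r x)).
by apply: eq_bigr => u _; rewrite mulrC wsym [w z _]wsym.
Qed.

Definition P := FF fst snd r.
Definition Q := FF snd fst r.
Definition T x := P x + Q x.
Lemma lP : linA P. Proof. exact: lFF. Qed.
Lemma lQ : linA Q. Proof. exact: lFF. Qed.
Lemma lT : linA T. Proof. exact: (linA_add lP lQ). Qed.
Lemma adjP x z : w (P x) z = w x (Q z). Proof. exact: adjFF. Qed.
Lemma adjQ x z : w (Q x) z = w x (P z). Proof. exact: adjFF. Qed.
Lemma adjT x z : w (T x) z = w x (T z).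
Proof. by rewrite /T wDl wDr adjP adjQ addrC. Qed.
Lemma PE : Pmap w r = P. Proof. by []. Qed.
Lemma TrE y : Tr (tadd r (tau r)) (w y) = T y.
Proof. by rewrite /Tr /tadd big_cat /= big_map. Qed.

Lemma wexp a v : w a v = \sum_(p < n) v 0 p * w a (delta_mx 0 p).
Proof. by rewrite {1}[v]row_sum_delta (linK_sum _ _ _ (lw_r a)). Qed.

Lemma contr_key a b (s : seq (A * A)) :
  \sum_(u <- s) w a u.1 * w b u.2 =
  \sum_(p < n) \sum_(q < n) (w a (delta_mx 0 p) * w b (delta_mx 0 q)) * tcoord2 s p q.
Proof.
under eq_bigr => u _ do rewrite (wexp a) (wexp b) big_distrlr /=.
rewrite exchange_big /=; apply: eq_bigr => p _.
rewrite exchange_big /=; apply: eq_bigr => q _.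
rewrite /tcoord2 mulr_sumr; apply: eq_bigr => u _; ring.
Qed.

Lemma contr (s t : seq (A * A)) a b : teq2 s t ->
  \sum_(u <- s) w a u.1 * w b u.2 = \sum_(u <- t) w a u.1 * w b u.2.
Proof.
move=> H; rewrite !contr_key; apply: eq_bigr => p _; apply: eq_bigr => q _.
by rewrite H.
Qed.

Lemma wodot a x c : w a (odot x c) = w (circ a x) c.
Proof.
rewrite /Defs.odot wDr [w a (succ _ _)]wsym [w a (prec _ _)]wsym Q2 Q1 /Defs.star wDr.
rewrite [w (circ a x) c]wsym; ring.
Qed.

Lemma inv1 (s : seq (A * A)) x :
  teq2 (tapp2 (odot x) id s) (tapp2 id (fun y => circ y x) s) ->
  forall a, FF fst snd s (circ a x) = circ (FF fst snd s a) x.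
Proof.
move=> H a; apply: veq => b.
have e := contr a b H; rewrite /tapp2 !big_map /= in e.
transitivity (\sum_(u <- s) w a (odot x u.1) * w b u.2).
  rewrite /FF (linK_sum _ _ _ (lw_r b)); apply: eq_bigr => u _.
  by rewrite wodot mulrC.
rewrite e /FF (linA_sum _ _ _ (lc_l x)) (linK_sum _ _ _ (lw_r b)).
by apply: eq_bigr.
Qed.

Lemma inv2 (s : seq (A * A)) x :
  teq2 (tapp2 (star x) id (tau s)) (tapp2 id (fun y => prec y x) (tau s)) ->
  forall a b, w a (star x (FF fst snd s b)) = w (FF snd fst s a) (star x b).
Proof.
move=> H a b.
have e := contr a b H; rewrite /tapp2 /tau -!map_comp !big_map /= in e.
transitivity (\sum_(u <- s) w a (star x u.2) * w b u.1).
  rewrite /FF (linA_sum _ _ _ (lst_r x)) (linK_sum _ _ _ (lw_r a)); apply: eq_bigr => u _.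
  by rewrite mulrC.
rewrite e /FF (linK_sum _ _ _ (lw_l (star x b))); apply: eq_bigr => u _.
by rewrite [w b _]wsym Q1.
Qed.

Lemma FFsE1 x : FF fst snd (tadd r (tau r)) x = T x.
Proof. by rewrite /FF /tadd big_cat /= big_map. Qed.
Lemma FFsE2 x : FF snd fst (tadd r (tau r)) x = T x.
Proof. by rewrite /FF /tadd big_cat /= big_map addrC. Qed.

Hypothesis HI : LD_invariant succ prec (tadd r (tau r)).

Lemma I1 a x : T (circ a x) = circ (T a) x.
Proof. by have := inv1 (proj1 (HI x)) a; rewrite !FFsE1. Qed.

Lemma I2raw x a b : w a (star x (T b)) = w (T a) (star x b).
Proof. by have := inv2 (proj2 (HI x)) a b; rewrite FFsE1 FFsE2. Qed.

Lemma I2 a b : circ a (T b) = circ (T a) b.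
Proof.
apply: veq => x.
have e1 := I2raw x a b.
rewrite {1}/Defs.star wDr [w a (circ x _)]wsym [w a (circ _ x)]wsym !Dc /Defs.star !wDr in e1.
have e2 := Dc (T a) x b.
have e3 : w (T b) (circ a x) = w (circ (T a) x) b by rewrite adjT I1 wsym.
apply: (lin3 (c:=1) (d:=-1) (f:=-1) e1 e2 e3); rewrite /Defs.star !wDr; ring.
Qed.

Lemma QE u : Q u = T u - P u.
Proof. by rewrite /T addrAC subrr add0r. Qed.
Lemma Tcr a b : T (circ a b) = circ a (T b).
Proof. by rewrite I1 I2. Qed.

Lemma R1v x z : Q (circ (P x) z) = circ (P x) (P z) + circ (P x) (Q z) - P (circ (P x) z).
Proof. by rewrite QE Tcr /T (linAD (lc_r _)). Qed.

Lemma R2v x z : P (circ x (Q z)) = P (circ (P x) z) + P (circ (Q x) z) - P (circ x (P z)).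
Proof.
rewrite QE (linAB (lc_r _)) I2 /T (linAD (lc_l _)) (linAB lP) (linAD lP) //.
Qed.

Definition Star1 x z := Q (circ (P x) z) = circ (P x) (Q z) - P (circ x (Q z)).
Definition Gs x z := circ (P x) (P z) = P (circ x (P z)) - P (circ (Q x) z).

Lemma L1 x z : Star1 x z <-> Gs x z.
Proof.
rewrite /Star1 /Gs R1v R2v; apply: zeq.
apply: veq => v; rewrite !wDr !wNr; wx; ring.
Qed.

Ltac wxl := repeat (first [rewrite wDl | rewrite wNl]).

Definition Tg1 x y := succ (P x) (P y) = P (succ (P x) y + succ x (P y) - succ x (T y)).

Lemma K1 x y z : w (succ (P x) (P y)) z - w (P (succ (P x) y + succ x (P y) - succ x (T y))) z
  = - (w y (Q (circ (P x) z)) - w y (circ (P x) (Q z) - P (circ x (Q z)))).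
Proof.
rewrite /T (linAD (ls_r x)) Q2 adjP adjP; wxl; rewrite !Q2 !adjP !adjQ; wx; ring.
Qed.

Lemma L2 x : (forall y, Tg1 x y) <-> (forall z, Star1 x z).
Proof.
split=> H.
  move=> z; apply: veq => y; apply/eqP; rewrite -subr_eq0 -oppr_eq0 -K1.
  by rewrite (H y) subrr.
move=> y; apply: veq' => z; apply/eqP; rewrite -subr_eq0 K1.
by rewrite (H z) subrr oppr0.
Qed.

Lemma sDl x y z : succ (x + y) z = succ x z + succ y z. Proof. exact: (linAD (ls_l z)). Qed.
Lemma sDr x y z : succ z (x + y) = succ z x + succ z y. Proof. exact: (linAD (ls_r z)). Qed.
Lemma sNl x z : succ (- x) z = - succ x z. Proof. exact: (linAN (ls_l z)). Qed.
Lemma sNr x z : succ z (- x) = - succ z x. Proof. exact: (linAN (ls_r z)). Qed.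
Lemma pDl x y z : prec (x + y) z = prec x z + prec y z. Proof. exact: (linAD (lp_l z)). Qed.
Lemma pDr x y z : prec z (x + y) = prec z x + prec z y. Proof. exact: (linAD (lp_r z)). Qed.
Lemma pNl x z : prec (- x) z = - prec x z. Proof. exact: (linAN (lp_l z)). Qed.
Lemma pNr x z : prec z (- x) = - prec z x. Proof. exact: (linAN (lp_r z)). Qed.
Lemma cDl x y z : circ (x + y) z = circ x z + circ y z. Proof. exact: (linAD (lc_l z)). Qed.
Lemma cDr x y z : circ z (x + y) = circ z x + circ z y. Proof. exact: (linAD (lc_r z)). Qed.
Lemma cNl x z : circ (- x) z = - circ x z. Proof. exact: (linAN (lc_l z)). Qed.
Lemma cNr x z : circ z (- x) = - circ z x. Proof. exact: (linAN (lc_r z)). Qed.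
Lemma PD x y : P (x + y) = P x + P y. Proof. exact: (linAD lP). Qed.
Lemma PN x : P (- x) = - P x. Proof. exact: (linAN lP). Qed.
Lemma QD x y : Q (x + y) = Q x + Q y. Proof. exact: (linAD lQ). Qed.
Lemma QN x : Q (- x) = - Q x. Proof. exact: (linAN lQ). Qed.

Lemma sZl a x z : succ (a *: x) z = a *: succ x z. Proof. exact: (linAZ (ls_l z)). Qed.
Lemma sZr a x z : succ z (a *: x) = a *: succ z x. Proof. exact: (linAZ (ls_r z)). Qed.
Lemma pZl a x z : prec (a *: x) z = a *: prec x z. Proof. exact: (linAZ (lp_l z)). Qed.
Lemma pZr a x z : prec z (a *: x) = a *: prec z x. Proof. exact: (linAZ (lp_r z)). Qed.
Lemma cZl a x z : circ (a *: x) z = a *: circ x z. Proof. exact: (linAZ (lc_l z)). Qed.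
Lemma cZr a x z : circ z (a *: x) = a *: circ z x. Proof. exact: (linAZ (lc_r z)). Qed.
Lemma PZ a x : P (a *: x) = a *: P x. Proof. exact: (linAZ lP). Qed.
Lemma QZ a x : Q (a *: x) = a *: Q x. Proof. exact: (linAZ lQ). Qed.

Ltac nx := repeat first [rewrite wZr | rewrite PZ | rewrite QZ | rewrite cZl | rewrite cZr
  | rewrite sZl | rewrite sZr | rewrite pZl | rewrite pZr | rewrite wDr | rewrite wNr | rewrite PD | rewrite PN | rewrite QD
  | rewrite QN | rewrite cDl | rewrite cDr | rewrite cNl | rewrite cNr | rewrite sDl
  | rewrite sDr | rewrite sNl | rewrite sNr | rewrite pDl | rewrite pDr | rewrite pNl
  | rewrite pNr].

Lemma Tstar_r a b : T (star a b) = star a (T b).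
Proof. by rewrite /Defs.star (linAD lT) Tcr I1. Qed.
Lemma Tstar_l a b : T (star a b) = star (T a) b.
Proof. by rewrite /Defs.star (linAD lT) I1 Tcr. Qed.
Lemma Pstar_d y z : P (star y (Q z)) = P (star (P y) z) + P (star (Q y) z) - P (star y (P z)).
Proof.
rewrite QE (linAB (lst_r _)).
have -> : star y (T z) = star (T y) z by rewrite /Defs.star (I2 y z) -(I2 z y).
apply: veq => v; rewrite /T /Defs.star; nx; ring.
Qed.

Definition Star2 y z := Q (star (P y) z) = Q (star y (Q z)) - star (Q y) (Q z).

Lemma L3 : (forall x z, Gs x z) -> forall y z, Star2 y z.
Proof.
move=> H y z; rewrite /Star2.
rewrite (QE (star (P y) z)) (QE (star y (Q z))) Tstar_r Tstar_l Pstar_d.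
apply: veq => v.
move: (congr1 (w v) (H y z)) (congr1 (w v) (H z y)) (congr1 (w v) (R2v z y)).
rewrite /T /Defs.star; nx => g1 g2 g3.
apply: (lin3 (c:=1) (d:=1) (f:=1) g1 g2 g3); ring.
Qed.

Definition Tg2 x y := prec (P x) (P y) = P (prec (P x) y + prec x (P y) - prec x (T y)).

Lemma L4 y : (forall z, Star2 y z) -> forall x, Tg2 x y.
Proof.
move=> H x; apply: veq' => z.
rewrite Q1 adjP (H z) adjP /T pDr; wxl; rewrite !Q1 !adjP; wx; ring.
Qed.

Definition Mg : 'M[K]_n := \matrix_(p, q) w (delta_mx 0 p) (delta_mx 0 q).

Lemma uM u q : (u *m Mg) 0 q = w u (delta_mx 0 q).
Proof.
rewrite mxE wsym wexp; apply: eq_bigr => p _; by rewrite mxE wsym.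
Qed.

Lemma Mg_unit : Mg \in unitmx.
Proof.
rewrite -row_free_unit; apply: inj_row_free => v Hv.
apply: Hnd => y; rewrite wexp big1 // => q _.
by rewrite -uM Hv mxE mulr0.
Qed.

Definition f (p : 'I_n) : A := delta_mx 0 p *m invmx Mg.

Lemma fE p v : w (f p) v = v 0 p.
Proof.
rewrite wexp.
under eq_bigr => q _ do rewrite -uM /f mulmxKV ?Mg_unit // mxE.
rewrite (bigD1 p) //= eqxx /= mulr1 big1 ?addr0 // => q /negbTE nq.
by rewrite nq mulr0.
Qed.

Lemma fexp a : a = \sum_(p < n) w a (delta_mx 0 p) *: f p.
Proof.
apply: veq' => z; rewrite (linK_sum _ _ _ (lw_l z)) wexp.
by apply: eq_bigr => p _; rewrite fE mulrC.
Qed.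

Definition S3 x y z : K := \sum_(i <- r) \sum_(j <- r)
    (w x i.1 * w y j.1 * w z (circ j.2 i.2)
     - w x i.1 * w y (odot i.2 j.1) * w z j.2
     - w x (succ i.1 j.1) * w y i.2 * w z j.2).

Lemma ScoordE p q t : Scoord succ prec r p q t = S3 (f p) (f q) (f t).
Proof. rewrite /Scoord /S3; apply: eq_bigr => i _; apply: eq_bigr => j _; by rewrite !fE. Qed.

Definition Gv x y := circ (P y) (P x) - P (circ y (P x)) + P (circ (Q y) x).

Lemma hFF (h : A -> K) g k s x : linK h -> h (FF g k s x) = \sum_(u <- s) w x (g u) * h (k u).
Proof. by move=> H; rewrite /FF (linK_sum _ _ _ H). Qed.

Lemma S3E x y z : S3 x y z = w z (Gv x y).
Proof.
rewrite /S3; under eq_bigr => i _ do rewrite !sumrB; rewrite !sumrB.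
have e1 : w z (circ (P y) (P x)) = \sum_(i <- r) \sum_(j <- r) w x i.1 * w y j.1 * w z (circ j.2 i.2).
  rewrite (@hFF (fun v => w z (circ (P y) v))); last exact: (linK_comp (lw_r z) (lc_r _)).
  apply: eq_bigr => i _.
  rewrite (@hFF (fun v => w z (circ v i.2))); last exact: (linK_comp (lw_r z) (lc_l _)).
  rewrite mulr_sumr; apply: eq_bigr => j _; ring.
have e2 : w y (odot (P x) (Q z)) = \sum_(i <- r) \sum_(j <- r) w x i.1 * w y (odot i.2 j.1) * w z j.2.
  rewrite (@hFF (fun v => w y (odot v (Q z)))); last exact: (linK_comp (lw_r y) (lo_l _)).
  apply: eq_bigr => i _.
  rewrite (@hFF (fun v => w y (odot i.2 v))); last exact: (linK_comp (lw_r y) (lo_r _)).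
  rewrite mulr_sumr; apply: eq_bigr => j _; ring.
have e3 : w x (succ (Q y) (Q z)) = \sum_(i <- r) \sum_(j <- r) w x (succ i.1 j.1) * w y i.2 * w z j.2.
  rewrite (@hFF (fun v => w x (succ v (Q z)))); last exact: (linK_comp (lw_r x) (ls_l _)).
  apply: eq_bigr => i _.
  rewrite (@hFF (fun v => w x (succ i.1 v))); last exact: (linK_comp (lw_r x) (ls_r _)).
  rewrite mulr_sumr; apply: eq_bigr => j _; ring.
rewrite -e1 -e2 -e3 wodot [w (circ y _) _]wsym adjQ [w x _]wsym Q2 adjQ /Gv.
wx; ring.
Qed.

Lemma lGv1 b : linA (fun a => Gv a b).
Proof. move=> c a a'; apply: veq => v; rewrite /Gv; nx; ring. Qed.
Lemma lGv2 a : linA (fun b => Gv a b).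
Proof. move=> c b b'; apply: veq => v; rewrite /Gv; nx; ring. Qed.

Lemma L5 : S_zero succ prec r <-> (forall x z, Gs x z).
Proof.
split=> H.
  have H0 p q : Gv (f p) (f q) = 0.
    apply/rowP => t; transitivity (0 : K); last by rewrite mxE.
    by rewrite -fE -S3E -ScoordE; exact: H.
  have HG a b : Gv a b = 0.
    rewrite [a]fexp (linA_sum _ _ _ (lGv1 b)) big1 // => p _.
    rewrite [b]fexp (linA_sum _ _ _ (lGv2 (f p))) big1 ?scaler0 // => q _.
    by rewrite H0 scaler0.
  move=> x z; apply/eqP; rewrite -subr_eq0; apply/eqP.
  rewrite -(HG z x) /Gv; apply: veq => v; wx; ring.
move=> p q t; rewrite ScoordE S3E /Gv (H (f q) (f p)).
by rewrite addrAC subrK subrr wsym (linK0 (lw_l _)).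
Qed.
End LD2.

Theorem mainTheorem16 (K : fieldType) (n : nat)
  (succ prec : 'rV[K]_n -> 'rV[K]_n -> 'rV[K]_n)
  (omega : 'rV[K]_n -> 'rV[K]_n -> K)
  (r : seq ('rV[K]_n * 'rV[K]_n)) :
  is_quadratic_LD succ prec omega ->
  LD_invariant succ prec (tadd r (tau r)) ->
  let P := Pmap omega r in
  S_zero succ prec r <->
  ((forall x y, succ (P x) (P y) =
       P (succ (P x) y + succ x (P y) - succ x (Tr (tadd r (tau r)) (omega y)))) /\
   (forall x y, prec (P x) (P y) =
       P (prec (P x) y + prec x (P y) - prec x (Tr (tadd r (tau r)) (omega y))))).
Proof.
move=> HQ HI P0; rewrite /P0.
split.
  move=> HS; have G := (L5 r HQ).1 HS.
  split=> x y; rewrite (TrE omega r).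
    exact: ((L2 r HQ x).2 (fun z => (L1 (r:=r) HQ HI x z).2 (G x z)) y).
  exact: (L4 (r:=r) HQ (L3 (r:=r) HQ HI G y) x).
case=> H1 _; apply/(L5 r HQ) => x z; apply/(L1 (r:=r) HQ HI).
apply: ((L2 r HQ x).1 _ z) => y; have := H1 x y; by rewrite (TrE omega r).
Qed.
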